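(* Let $\Gamma$ be a set of axioms. Then $\mathsf{ICK}\oplus\Gamma$ is sound and complete with respect to the class of conditional Esakia spaces that validate $\Gamma$.
   Context: Formulas are generated by $\phi ::= p\mid\bot\mid\phi\wedge\phi\mid\phi\vee\phi\mid\phi\to\phi\mid\phi\mathrel{\Box\!\!\!\rightarrow}\phi$. $\mathsf{ICK}\oplus\Gamma$ is the smallest set of formulas containing intuitionistic propositional logic, $\Gamma$, $(p\mathrel{\Box\!\!\!\rightarrow}(q\wedge r))\leftrightarrow((p\mathrel{\Box\!\!\!\rightarrow} q)\wedge(p\mathrel{\Box\!\!\!\rightarrow} r))$ and $(p\mathrel{\Box\!\!\!\rightarrow}\top)\leftrightarrow\top$, closed under uniform substitution, modus ponens, and the congruence rules (from $p\leftrightarrow q$ infer $(p\mathrel{\Box\!\!\!\rightarrow} r)\leftrightarrow(q\mathrel{\Box\!\!\!\rightarrow} r)$ and $(r\mathrel{\Box\!\!\!\rightarrow} p)\leftrightarrow(r\mathrel{\Box\!\!\!\rightarrow} q)$). A conditional Esakia space is an Esakia space $(X,\leq,\tau)$ with relations $\{R_a\mid a \text{ a clopen upset}\}$ such that $\{x\mid R_a[x]\subseteq b\}$ is clopen for all clopen upsets $a,b$, $(\leq\circ R_a\circ\leq)=R_a$, and each $R_a[x]$ is closed. Formulas are interpreted with valuations assigning clopen upsets to proposition letters, intuitionistic clauses as in Kripke semantics, and $x\models\phi\mathrel{\Box\!\!\!\rightarrow}\psi$ iff every $y$ with $xR_{V(\phi)}y$ satisfies $\psi$; a space validates $\phi$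 if $\phi$ is true at every world under every clopen valuation. *)

(* Defs.v *)
From mathcomp Require Import all_boot all_classical topology.

Set Implicit Arguments.
Unset Strict Implicit.
Unset Printing Implicit Defensive.

Local Open Scope classical_set_scope.

Inductive form : Type :=
  | Var : nat -> form
  | Bot : form
  | And : form -> form -> form
  | Or  : form -> form -> form
  | Imp : form -> form -> form
  | Cond : form -> form -> form.

Definition Top : form := Imp Bot Bot.
Definition Iff (a b : form) : form := And (Imp a b) (Imp b a).

Fixpoint subst (s : nat -> form) (f : form) : form :=
  match f with
  | Var n => s n
  | Bot => Bot
  | And a b => And (subst s a) (subst s b)
  | Or a b => Or (subst s a) (subst s b)
  | Imp a b => Imp (subst s a) (subst s b)
  | Cond a b => Cond (subst s a) (subst s b)
  end.

Inductive ICK (Gamma : form -> Prop) : form -> Prop :=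
  | ipc_k a b : ICK Gamma (Imp a (Imp b a))
  | ipc_s a b c :
      ICK Gamma (Imp (Imp a (Imp b c)) (Imp (Imp a b) (Imp a c)))
  | ipc_and1 a b : ICK Gamma (Imp (And a b) a)
  | ipc_and2 a b : ICK Gamma (Imp (And a b) b)
  | ipc_andI a b : ICK Gamma (Imp a (Imp b (And a b)))
  | ipc_or1 a b : ICK Gamma (Imp a (Or a b))
  | ipc_or2 a b : ICK Gamma (Imp b (Or a b))
  | ipc_orE a b c :
      ICK Gamma (Imp (Imp a c) (Imp (Imp b c) (Imp (Or a b) c)))
  | ipc_efq a : ICK Gamma (Imp Bot a)
  | ick_gamma g : Gamma g -> ICK Gamma g
  | ick_and :
      ICK Gamma (Iff (Cond (Var 0) (And (Var 1) (Var 2)))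
                     (And (Cond (Var 0) (Var 1)) (Cond (Var 0) (Var 2))))
  | ick_top : ICK Gamma (Iff (Cond (Var 0) Top) Top)
  | ick_subst s f : ICK Gamma f -> ICK Gamma (subst s f)
  | ick_mp a b : ICK Gamma (Imp a b) -> ICK Gamma a -> ICK Gamma b
  | ick_congl p q r :
      ICK Gamma (Iff p q) -> ICK Gamma (Iff (Cond p r) (Cond q r))
  | ick_congr p q r :
      ICK Gamma (Iff p q) -> ICK Gamma (Iff (Cond r p) (Cond r q)).

Section Spaces.
Variable X : topologicalType.
Variable le : X -> X -> Prop.

Definition upset (A : set X) : Prop := forall x y, le x y -> A x -> A y.
Definition downclosure (A : set X) : set X := [set x | exists2 y, A y & le x y].
Definition clopen_upset (A : set X) : Prop := clopen A /\ upset A.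

Definition esakia_space : Prop :=
  (forall x, le x x) /\
  (forall x y, le x y -> le y x -> x = y) /\
  (forall x y z, le x y -> le y z -> le x z) /\
  compact [set: X] /\
  (forall x y, ~ le x y -> exists U, [/\ clopen_upset U, U x & ~ U y]) /\
  (forall U, clopen U -> clopen (downclosure U)).

(* R a x y  means  x R_a y ; only the values at clopen upsets a matter. *)
Definition image_of (R : set X -> X -> X -> Prop) (a : set X) (x : X) : set X :=
  [set y | R a x y].

Definition conditional_esakia_space (R : set X -> X -> X -> Prop) : Prop :=
  [/\ esakia_space,
      (forall a b, clopen_upset a -> clopen_upset b ->
         clopen [set x | image_of R a x `<=` b]),
      (forall a, clopen_upset a ->
         forall x y, R a x y <->
           exists x', exists y', [/\ le x x', R a x' y' & le y' y]) &
      (forall a, clopen_upset a -> forall x, closed (image_of R a x))].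

Definition valuation (V : nat -> set X) : Prop := forall n, clopen_upset (V n).

Fixpoint truth (R : set X -> X -> X -> Prop) (V : nat -> set X) (f : form)
  : set X :=
  match f with
  | Var n => V n
  | Bot => set0
  | And a b => truth R V a `&` truth R V b
  | Or a b => truth R V a `|` truth R V b
  | Imp a b => [set x | forall y, le x y -> truth R V a y -> truth R V b y]
  | Cond a b => [set x | forall y, R (truth R V a) x y -> truth R V b y]
  end.

Definition valid (R : set X -> X -> X -> Prop) (f : form) : Prop :=
  forall V, valuation V -> forall x, truth R V f x.

End Spaces.

(* Main.v *)
From HB Require Import structures.
Require Import Defs.
From mathcomp Require Import all_boot finmap all_classical topology.

Set Implicit Arguments.
Unset Strict Implicit.
Unset Printing Implicit Defensive.
Local Open Scope classical_set_scope.


Section PT.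
Variable G : form -> Prop.
Local Notation Th := (ICK G).

Inductive Dv (D : set form) : form -> Prop :=
  | dv_hyp a : D a -> Dv D a
  | dv_thm a : Th a -> Dv D a
  | dv_mp a b : Dv D (Imp a b) -> Dv D a -> Dv D b.

Lemma thm_I a : Th (Imp a a).
Proof.
apply: ick_mp (ipc_k _ a a).
exact: ick_mp (ipc_s _ a (Imp a a) a) (ipc_k _ a (Imp a a)).
Qed.

Lemma dv_mono D D' a : D `<=` D' -> Dv D a -> Dv D' a.
Proof.
move=> sDD; elim=> [c /sDD|c|c d _ IH1 _ IH2]; first exact: dv_hyp.
  exact: dv_thm.
exact: dv_mp IH1 IH2.
Qed.

Lemma deduction D a b : Dv (D `|` [set a]) b -> Dv D (Imp a b).
Proof.
elim=> [c [Dc| ->]|c Tc|c d _ IH1 _ IH2].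
- exact: dv_mp (dv_thm _ (ipc_k _ _ _)) (dv_hyp Dc).
- exact/dv_thm/thm_I.
- exact: dv_mp (dv_thm _ (ipc_k _ _ _)) (dv_thm _ Tc).
- exact: dv_mp (dv_mp (dv_thm _ (ipc_s _ _ _ _)) IH1) IH2.
Qed.

Lemma undeduce D a b : Dv D (Imp a b) -> Dv (D `|` [set a]) b.
Proof.
move=> H; apply: (dv_mp (a:=a)); last by apply: dv_hyp; right.
by apply: dv_mono H => x; left.
Qed.

Lemma dv_set0 a : Dv set0 a -> Th a.
Proof. by elim=> // c d _ H1 _ H2; exact: ick_mp H1 H2. Qed.

Lemma ded0 a b : Dv [set a] b -> Th (Imp a b).
Proof. by move=> H; apply/dv_set0/deduction; rewrite set0U. Qed.

Lemma mkIff p q : Th (Imp p q) -> Th (Imp q p) -> Th (Iff p q).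
Proof. by move=> H1 H2; exact: ick_mp (ick_mp (ipc_andI _ _ _) H1) H2. Qed.

Lemma iff1 p q : Th (Iff p q) -> Th (Imp p q).
Proof. by move=> H; exact: ick_mp (ipc_and1 _ _ _) H. Qed.

Lemma iff2 p q : Th (Iff p q) -> Th (Imp q p).
Proof. by move=> H; exact: ick_mp (ipc_and2 _ _ _) H. Qed.

Lemma iff_sym p q : Th (Iff p q) -> Th (Iff q p).
Proof. by move=> H; apply: mkIff; [exact: iff2 H|exact: iff1 H]. Qed.

Lemma thm_top : Th Top.
Proof. exact: ipc_efq. Qed.

Lemma thm_iff_top b : Th b -> Th (Iff Top b).
Proof.
move=> Hb; apply: mkIff; first exact: ick_mp (ipc_k _ _ _) Hb.
exact: ick_mp (ipc_k _ _ _) thm_top.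
Qed.

Lemma ick_and_inst a b c :
  Th (Iff (Cond a (And b c)) (And (Cond a b) (Cond a c))).
Proof.
pose s n := match n with 0 => a | 1 => b | _ => c end.
exact: (ick_subst s (ick_and G)).
Qed.

Lemma ick_top_inst a : Th (Iff (Cond a Top) Top).
Proof.
pose s (n : nat) := a.
exact: (ick_subst s (ick_top G)).
Qed.

Definition dclosed (T : set form) := forall a, Dv T a -> T a.
Definition ptheory (T : set form) :=
  [/\ dclosed T, ~ T Bot & forall a b, T (Or a b) -> T a \/ T b].

Section Closed.
Variable T : set form.
Hypothesis cT : dclosed T.

Lemma thm_in a : Th a -> T a.
Proof. by move=> H; apply: cT; exact: dv_thm. Qed.

Lemma mp_in a b : T (Imp a b) -> T a -> T b.
Proof. by move=> H1 H2; apply: cT; exact: dv_mp (dv_hyp H1) (dv_hyp H2). Qed.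

Lemma thmmp_in a b : Th (Imp a b) -> T a -> T b.
Proof. by move=> H; apply: mp_in; exact: thm_in. Qed.

Lemma and_in a b : T (And a b) <-> T a /\ T b.
Proof.
split=> [H|[Ha Hb]]; first by split; apply: thmmp_in H; [exact: ipc_and1|exact: ipc_and2].
exact: mp_in (thmmp_in (ipc_andI _ _ _) Ha) Hb.
Qed.

Lemma top_in : T Top.
Proof. exact/thm_in/thm_top. Qed.

Lemma iff_in p q : Th (Iff p q) -> T p -> T q.
Proof. by move=> /iff1; exact: thmmp_in. Qed.

Lemma cond_closed a c : Dv [set d | T (Cond a d)] c -> T (Cond a c).
Proof.
elim=> [d //|d Hd|d e _ IH1 _ IH2].
- apply: iff_in (ick_congr _ (thm_iff_top Hd)) _.
  exact: iff_in (iff_sym (ick_top_inst a)) top_in.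
- have H1 : T (Cond a (And (Imp d e) d)).
    by apply: iff_in (iff_sym (ick_and_inst _ _ _)) _; apply/and_in.
  have H2 : Th (Iff (And (Imp d e) d) (And (And (Imp d e) d) e)).
    apply: mkIff; last exact: ipc_and1.
    apply: ded0; set x := And _ _.
    have Hx : Dv [set x] x by exact: dv_hyp.
    have Hde := dv_mp (dv_thm _ (ipc_and1 _ _ _)) Hx.
    have Hd := dv_mp (dv_thm _ (ipc_and2 _ _ _)) Hx.
    exact: dv_mp (dv_mp (dv_thm _ (ipc_andI _ _ _)) Hx) (dv_mp Hde Hd).
  have /(iff_in (ick_and_inst _ _ _))/and_in[_ //] := iff_in (ick_congr _ H2) H1.
Qed.

End Closed.

Lemma or_in T a b : ptheory T -> T (Or a b) <-> T a \/ T b.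
Proof.
move=> [cT _ pT]; split; first exact: pT.
by case=> H; apply: thmmp_in H => //; [exact: ipc_or1|exact: ipc_or2].
Qed.

Lemma chain_dv D (F : set (set form)) a : total_on F subset ->
  Dv (D `|` \bigcup_(S in F) S) a -> Dv D a \/ exists2 S, F S & Dv (D `|` S) a.
Proof.
move=> tF; elim=> [c [Dc|[Y FS Sc]]|c Hc|c d _ IH1 _ IH2].
- by left; exact: dv_hyp.
- by right; exists Y => //; apply: dv_hyp; right.
- by left; exact: dv_thm.
case: IH1 => [H1|[Y FS H1]]; case: IH2 => [H2|[Y' FS' H2]].
- by left; exact: dv_mp H1 H2.
- right; exists Y' => //; apply: dv_mp (dv_mono _ H1) H2 => x; by left.
- right; exists Y => //; apply: dv_mp H1 (dv_mono _ H2) => x; by left.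
have [sSS|sSS] := tF _ _ FS FS'.
- right; exists Y' => //; apply: dv_mp (dv_mono _ H1) H2 => x [?|/sSS ?]; by [left|right].
- right; exists Y => //; apply: dv_mp H1 (dv_mono _ H2) => x [?|/sSS ?]; by [left|right].
Qed.

Lemma lindenbaum D b : ~ Dv D b ->
  exists T, [/\ ptheory T, D `<=` T & ~ T b].
Proof.
move=> nDb.
have [Y [PY Ymax]] : exists Y, [set Y | ~ Dv (D `|` Y) b] Y /\
    forall B, Y `<` B -> ~ [set Y | ~ Dv (D `|` Y) b] B.
  apply: Zorn_bigcup => F FP tF /= H.
  case: (chain_dv tF H) => [//|[Y FY HY]].
  exact: FP FY HY.
set M := D `|` Y.
have ext a : ~ M a -> Dv (M `|` [set a]) b.
  move=> nMa; apply: contrapT => nD.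
  apply: (Ymax (Y `|` [set a])) => /=.
    split; first by move=> x Yx; left.
    by move=> /(_ a (or_intror erefl)) Ya; apply: nMa; right.
  by rewrite setUA.
have cM : dclosed M.
  move=> a Ha; apply: contrapT => nMa.
  exact: PY (dv_mp (deduction (ext _ nMa)) Ha).
exists M; split => //; last by move=> Mb; apply: PY; exact: dv_hyp.
- split => //.
  + move=> MB; apply: PY; exact: dv_mp (dv_thm _ (ipc_efq _ _)) (dv_hyp MB).
  + move=> a c Hac; apply: contrapT => /not_orP[nMa nMc].
    apply: PY; apply: dv_mp (dv_hyp Hac).
    apply: dv_mp (deduction (ext _ nMc)).
    exact: dv_mp (dv_thm _ (ipc_orE _ _ _ _)) (deduction (ext _ nMa)).
- by move=> x Dx; left.
Qed.
End PT.


Record pt (G : form -> Prop) := Pt { th : set form; thP : ptheory G th }.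

HB.instance Definition _ := gen_eqMixin form.
HB.instance Definition _ := gen_choiceMixin form.
HB.instance Definition _ G := gen_eqMixin (pt G).
HB.instance Definition _ G := gen_choiceMixin (pt G).

Section Canon1.
Variable G : form -> Prop.
Implicit Types x y : pt G.

Lemma clT x : dclosed G (th x). Proof. by case: x => ? []. Qed.
Lemma nbotT x : ~ th x Bot. Proof. by case: x => ? []. Qed.
Lemma thm_pt x a : ICK G a -> th x a. Proof. by move=> H; have := thm_in (@clT x) H. Qed.
Lemma and_pt x a b : th x (And a b) <-> th x a /\ th x b.
Proof. by have := and_in (@clT x) a b. Qed.
Lemma or_pt x a b : th x (Or a b) <-> th x a \/ th x b.
Proof. by have := or_in a b (thP x). Qed.

Definition myopen (A : set (pt G)) := forall x, A x -> exists a b,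
  [/\ th x a, ~ th x b & forall y, th y a -> ~ th y b -> A y].

Lemma myopT : myopen setT.
Proof.
move=> x _; exists Top, Bot; split => //; first exact/thm_pt/thm_top.
exact: nbotT.
Qed.

Lemma myopI : setI_closed myopen.
Proof.
move=> A B oA oB x [/oA [a [b [xa xb Ha]]] /oB [a' [b' [xa' xb' Ha']]]].
exists (And a a'), (Or b b'); split.
- exact/and_pt.
- by move/or_pt => [].
- move=> y /and_pt [ya ya'] nyb; split.
    by apply: (Ha y ya) => yb; apply: nyb; apply/or_pt; left.
  by apply: (Ha' y ya') => yb; apply: nyb; apply/or_pt; right.
Qed.

Lemma myop_bigU (I : Type) (f : I -> set (pt G)) :
  (forall i, myopen (f i)) -> myopen (\bigcup_i f i).
Proof.
move=> hf x [i _ /hf [a [b [xa xb H]]]].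
by exists a, b; split => // y ya yb; exists i => //; apply: H.
Qed.

End Canon1.

HB.instance Definition _ G := isOpenTopological.Build (pt G)
  (@myopT G) (@myopI G) (@myop_bigU G).

Lemma my_cover (T : topologicalType) (I : eqType) (A : set T) (D : set I)
  (f : I -> set T) :
  compact A -> (forall i, D i -> open (f i)) -> A `<=` \bigcup_(i in D) f i ->
  exists l : seq I, (forall i, i \in l -> D i) /\
    A `<=` [set x | exists2 i, i \in l & f i x].
Proof.
move=> cA hf cov; apply: contrapT => nl.
pose B (l : seq I) := A `&` [set x | forall i, i \in l -> ~ f i x].
pose Dl := [set l : seq I | forall i, i \in l -> D i].
have FF : Filter (filter_from Dl B).
  apply: filter_from_filter; first by exists [::].
  move=> l1 l2 H1 H2; exists (l1 ++ l2).
    by move=> i; rewrite mem_cat => /orP[/H1|/H2].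
  by move=> x [Ax Hx]; split; split => // i ii; apply: Hx; rewrite mem_cat ii ?orbT.
have PF : ProperFilter (filter_from Dl B).
  apply: (filter_from_proper FF) => l Hl; apply: contrapT => ne; apply: nl.
  exists l; split => // x Ax; apply: contrapT => nx; apply: ne.
  by exists x; split => // i il fi; apply: nx; exists i.
have FA : filter_from Dl B A by exists [::] => // x [].
have [p [Ap clp]] := cA _ PF FA.
have [i Di fip] := cov p Ap.
have nb : nbhs p (f i) by apply: open_nbhs_nbhs; split => //; exact: hf.
have FBi : filter_from Dl B (B [:: i]).
  by exists [:: i] => // j; rewrite inE => /eqP ->.
have [x [[_ Hx] fx]] := clp _ _ FBi nb.
by apply: (Hx i) fx; rewrite inE.
Qed.

Section Canon2.
Variable G : form -> Prop.
Implicit Types x y : pt G.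
Local Notation U a := [set x : pt G | th x a].

Lemma openP (A : set (pt G)) : open A <-> myopen A.
Proof. by []. Qed.


Lemma mp_pt x a b : th x (Imp a b) -> th x a -> th x b.
Proof. by move=> H1 H2; have := mp_in (@clT G x) H1 H2. Qed.

Lemma imp_pt x a b :
  th x (Imp a b) <-> (forall y, th x `<=` th y -> th y a -> th y b).
Proof.
split=> [H y sxy ya|H]; first exact: mp_pt (sxy _ H) ya.
apply: contrapT => nx.
have nD : ~ Dv G (th x `|` [set a]) b.
  by move=> /deduction D; apply: nx; exact: (@clT G x _ D).
have [T [pT sT nTb]] := lindenbaum nD.
apply: nTb; apply: (H (Pt pT)) => /=; first by move=> c xc; apply: sT; left.
by apply: sT; right.
Qed.

Lemma cond_pt x a c : th x (Cond a c) <->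
  (forall y, (forall d, th x (Cond a d) -> th y d) -> th y c).
Proof.
split=> [H y Hy|H]; first exact: Hy.
apply: contrapT => nx.
have nD : ~ Dv G [set d | th x (Cond a d)] c.
  by move=> D; apply: nx; have := cond_closed (@clT G x) D.
have [T [pT sT nTb]] := lindenbaum nD.
by apply: nTb; apply: (H (Pt pT)) => d xd; apply: sT.
Qed.

Lemma thm_complete a : (forall x : pt G, th x a) -> ICK G a.
Proof.
move=> H; apply: contrapT => na.
have nD : ~ Dv G set0 a by move/dv_set0.
have [T [pT sT nTb]] := lindenbaum nD.
exact: nTb (H (Pt pT)).
Qed.

Lemma sub_thm a a' : (forall x : pt G, th x a -> th x a') -> ICK G (Imp a a').
Proof.
move=> H; apply: contrapT => na.
have nD : ~ Dv G [set a] a' by move/ded0.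
have [T [pT sT nTb]] := lindenbaum nD.
by apply: nTb (H (Pt pT) _); apply: sT.
Qed.

Lemma open_U a : open (U a).
Proof.
move=> x xa; exists a, Bot; split => //; first exact: nbotT.
Qed.

Lemma open_nU b : open (~` U b).
Proof.
move=> x xb; exists Top, b; split => //; exact/thm_pt/thm_top.
Qed.

Lemma clopen_U a : clopen (U a).
Proof. by split; [exact: open_U|rewrite -openC; exact: open_nU]. Qed.

Lemma compact_pt : compact [set: pt G].
Proof.
rewrite compact_ultra => F UF FT.
pose T0 := [set a | F (U a)].
have pT0 : ptheory G T0.
  split.
  - move=> a; elim => [c //| c Hc | c d _ IH1 _ IH2].
    + by rewrite /T0 /=; apply: (filterS _ FT) => y _; exact: thm_pt.
    + by apply: filterS (filterI IH1 IH2) => y [y1 y2] /=; exact: mp_pt y1 y2.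
  - rewrite /T0 /=.
    have -> : U Bot = set0 by apply/seteqP; split => // y /= /nbotT.
    exact: filter_not_empty.
  - move=> a b Hab; have [Fa|Fna] := in_ultra_setVsetC (U a) UF; first by left.
    right; apply: filterS (filterI Hab Fna) => y [/or_pt [//|yb] _] //.
exists (Pt pT0); split => //.
move=> A [B [oB Bp sBA]].
have [a [b [pa pb H]]] := oB _ Bp.
have [Fb|Fnb] := in_ultra_setVsetC (U b) UF; first by exfalso; apply: pb.
apply: filterS (filterI pa Fnb) => y [ya yb]; exact/sBA/H.
Qed.


Fixpoint bigAnd (s : seq (form * form)) : form :=
  match s with [::] => Top | e :: s' => And (Imp e.1 e.2) (bigAnd s') end.

Lemma bigAnd_pt x s :
  th x (bigAnd s) <-> (forall e, e \in s -> th x (Imp e.1 e.2)).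
Proof.
elim: s => [|e s IH] /=.
  by split=> // _; exact/thm_pt/thm_top.
rewrite and_pt IH; split=> [[H1 H2] e'|H].
  by rewrite in_cons => /orP [/eqP ->|]; [exact: H1|exact: H2].
split; first by apply: H; rewrite in_cons eqxx.
by move=> e' e's; apply: H; rewrite in_cons e's orbT.
Qed.

Definition lept x y := th x `<=` th y.

Lemma clopen_down C : clopen C -> exists psi,
  downclosure lept C = ~` U psi.
Proof.
move=> [oC cC].
have coC : compact C := subclosed_compact cC compact_pt (@subsetT _ C).
have cov0 : C `<=` \bigcup_(i in [set ab | U ab.1 `&` ~` U ab.2 `<=` C])
    (U i.1 `&` ~` U i.2).
  move=> x Cx; have [a [b [xa xb H]]] := oC x Cx.
  by exists (a, b) => //= y [ya yb]; exact: H.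
have [D' [sD' cov]] := my_cover (I := (form * form)%type) coC
  (fun ab _ => openI (@open_U ab.1) (@open_nU ab.2)) cov0.
exists (bigAnd D'); apply/seteqP; split.
- move=> x [y Cy lxy] /bigAnd_pt xpsi.
  have [e e_in [ye1 ye2]] := cov y Cy.
  by apply: ye2; apply: mp_pt ye1; apply: lxy; apply: xpsi.
- move=> x /= nx.
  have : ~ (forall e, e \in D' -> th x (Imp e.1 e.2)) by move=> H; apply: nx; apply/bigAnd_pt.
  move=> /existsNP [e /not_implyP [e_in /imp_pt nxe]].
  move: nxe => /existsNP [y /not_implyP [lxy /not_implyP [ye1 ye2]]].
  exists y => //; apply: (sD' e e_in); split => //.
Qed.

End Canon2.

Lemma subst_id f : subst Var f = f.
Proof. by elim: f => //= [a -> b ->|a -> b ->|a -> b ->|a -> b ->]. Qed.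

Section Canon3.
Variable G : form -> Prop.
Implicit Types x y : pt G.
Local Notation U a := [set x : pt G | th x a].

Lemma upset_U a : upset (@lept G) (U a).
Proof. by move=> x y lxy xa; exact: lxy. Qed.

Lemma cu_U (A : set (pt G)) : clopen A -> upset (@lept G) A ->
  exists psi, A = U psi.
Proof.
move=> cA uA; have [psi e] := clopen_down (clopenC A cA).
exists psi; apply/seteqP; split => x.
- move=> Ax; apply: contrapT => nx.
  have : (~` U psi) x by [].
  by rewrite -e => -[y nAy lxy]; apply: nAy; exact: uA lxy Ax.
- move=> xpsi; apply: contrapT => nAx.
  have : downclosure (@lept G) (~` A) x by exists x => //; exact: subset_refl.
  by rewrite e.
Qed.

Definition Rc (A : set (pt G)) x y :=
  exists a, A = U a /\ forall d, th x (Cond a d) -> th y d.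

Lemma Rc_U a x y : Rc (U a) x y <-> (forall d, th x (Cond a d) -> th y d).
Proof.
split; last by move=> H; exists a.
move=> [a' [e H]] d xd; apply: H.
have e1 : ICK G (Imp a a') by apply: sub_thm => z za; have : (U a') z by rewrite -e.
have e2 : ICK G (Imp a' a) by apply: sub_thm => z za; have : (U a) z by rewrite e.
have := ick_congl d (mkIff e1 e2) => /iff1 /thm_pt => /(_ x) xi.
exact: mp_pt xi xd.
Qed.

Lemma truth_U s f :
  truth (@lept G) Rc (fun n => U (s n)) f = U (subst s f).
Proof.
elim: f => [n|//|a IHa b IHb|a IHa b IHb|a IHa b IHb|a IHa b IHb] /=.
- by [].
- by apply/seteqP; split => x //= /nbotT.
- by rewrite IHa IHb; apply/seteqP; split => x /= /and_pt.
- by rewrite IHa IHb; apply/seteqP; split => x /= /or_pt.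
- by rewrite IHa IHb; apply/seteqP; split => x /= /imp_pt.
- rewrite IHa IHb; apply/seteqP; split => x /=.
    by move=> H; apply/cond_pt => y Hy; apply: H; apply/Rc_U.
  by move=> /cond_pt H y /Rc_U Hy; apply: H.
Qed.

Lemma valuation_U s : valuation (@lept G) (fun n => U (s n)).
Proof. by move=> n; split; [exact: (@clopen_U G (s n))|exact: upset_U]. Qed.

Lemma canon_ces : conditional_esakia_space (@lept G) Rc.
Proof.
split.
- split; [|split; [|split; [|split; [|split]]]].
  + by move=> x; exact: subset_refl.
  + move=> [X pX] [Y pY] /= l1 l2.
    have e : X = Y by apply/seteqP.
    by subst Y; rewrite (Prop_irrelevance pX pY).
  + by move=> x y z l1 l2; exact: subset_trans l1 l2.
  + exact: compact_pt.
  + move=> x y nl.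
    have [a /not_implyP [xa ya]] : exists a, ~ (th x a -> th y a).
      by apply/existsNP => H; apply: nl => a; exact: H.
    exists (U a); split => //; split; [exact: clopen_U|exact: upset_U].
  + move=> C cC; have [psi ->] := clopen_down cC.
    exact: (clopenC set0 (@clopen_U G psi)).
- move=> a b [ca ua] [cb ub].
  have [al ->] := cu_U ca ua; have [be ->] := cu_U cb ub.
  suff -> : [set x | image_of Rc (U al) x `<=` U be] = U (Cond al be).
    exact: (@clopen_U G (Cond al be)).
  apply/seteqP; split => x /=.
    by move=> H; apply/cond_pt => y Hy; apply: H; apply/Rc_U.
  by move=> /cond_pt H y /Rc_U Hy; apply: H.
- move=> a _ x y; split.
    by move=> H; exists x, y; split => //; exact: subset_refl.
  move=> [x' [y' [lxx [al [e H]] lyy]]].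
  by exists al; split => // d xd; apply: lyy; apply: H; apply: lxx.
- move=> a [ca ua] x.
  have [al ->] := cu_U ca ua.
  rewrite -openC; apply/openP => y /= ny.
  have [d /not_implyP [xd nyd]] : exists d, ~ (th x (Cond al d) -> th y d).
    by apply/existsNP => H; apply: ny; apply/Rc_U.
  exists Top, d; split => //; first exact/thm_pt/thm_top.
  by move=> z _ nzd /Rc_U H; apply: nzd; apply: H.
Qed.

End Canon3.


Section Sound.
Variables (X : topologicalType) (le : X -> X -> Prop)
  (R : set X -> X -> X -> Prop).
Hypothesis ces : conditional_esakia_space le R.

Lemma truth_Imp V a b : truth le R V (Imp a b) =
  ~` downclosure le (truth le R V a `&` ~` truth le R V b).
Proof.
apply/seteqP; split => x /=.
  by move=> H [y [ya nyb] lxy]; apply: nyb; exact: H.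
move=> H y lxy ya; apply: contrapT => nyb; apply: H; by exists y.
Qed.

Lemma truth_cu V f : valuation le V -> clopen_upset le (truth le R V f).
Proof.
have [[refl [anti [trans [cpt [pri down]]]]] c2 c3 c4] := ces.
move=> hV; elim: f => [n||a [ca ua] b [cb ub]|a [ca ua] b [cb ub]|a [ca ua] b [cb ub]
  |a [ca ua] b [cb ub]].
- exact: hV.
- by split; [exact: clopen0|move=> x y _].
- split; first exact: clopenI.
  by move=> x y lxy [xa xb]; split; [exact: ua lxy xa|exact: ub lxy xb].
- split; first exact: clopenU.
  by move=> x y lxy [xa|xb]; [left; exact: ua lxy xa|right; exact: ub lxy xb].
- split.
    rewrite truth_Imp; apply: (clopenC set0); apply: down.
    exact: clopenI ca (clopenC set0 cb).
  by move=> x y lxy H z lyz; apply: H; exact: trans lxy lyz.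
- split; first exact: c2.
  move=> x x0 lxx H y Ry; apply: H; apply/(c3 _ (conj ca ua)).
  by exists x0, y; split => //; exact: refl.
Qed.

Lemma truth_subst V s f :
  truth le R V (subst s f) = truth le R (fun n => truth le R V (s n)) f.
Proof.
by elim: f => //= [a -> b ->|a -> b ->|a -> b ->|a -> b ->].
Qed.

Lemma soundness Gamma f : (forall g, Gamma g -> valid le R g) ->
  ICK Gamma f -> valid le R f.
Proof.
have [[refl [anti [trans [cpt [pri down]]]]] c2 c3 c4] := ces.
have up V g : valuation le V -> upset le (truth le R V g).
  by move=> hV; have [] := truth_cu g hV.
move=> hG; elim => {f}.
- move=> a b V hV x /= y lxy ya z lyz zb; exact: up _ _ hV _ _ lyz ya.
- move=> a b c V hV x /= y _ H1 z lyz H2 w lzw wa.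
  have lyw := trans _ _ _ lyz lzw.
  exact: (H1 w lyw wa w (refl w) (H2 w lzw wa)).
- by move=> a b V hV x /= y _ [].
- by move=> a b V hV x /= y _ [].
- move=> a b V hV x /= y _ ya z lyz zb; split => //; exact: up _ _ hV _ _ lyz ya.
- by move=> a b V hV x /= y _ ya; left.
- by move=> a b V hV x /= y _ ya; right.
- move=> a b c V hV x /= y _ H1 z lyz H2 w lzw [wa|wb].
    exact: H1 w (trans _ _ _ lyz lzw) wa.
  exact: H2 w lzw wb.
- by move=> a V hV x /= y _ [].
- by move=> g Gg; apply: hG.
- move=> V hV x /=; split.
    by move=> y _ H; split => z Rz; have [] := H z Rz.
  by move=> y _ [H1 H2] z Rz; split; [exact: H1|exact: H2].
- by move=> V hV x /=; split => y _ _ //; move=> z _ [].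
- move=> s f _ IH V hV x; rewrite truth_subst; apply: IH.
  by move=> n; apply: truth_cu.
- by move=> a b _ IH1 _ IH2 V hV x; exact: (IH1 V hV x x (refl x) (IH2 V hV x)).
- move=> p q r _ IH V hV x.
  have e : truth le R V p = truth le R V q.
    apply/seteqP; split=> y; have [H1 H2] := IH V hV y.
      exact: H1 y (refl y).
    exact: H2 y (refl y).
  by rewrite /= e; split => y _.
- move=> p q r _ IH V hV x.
  have e : truth le R V p = truth le R V q.
    apply/seteqP; split=> y; have [H1 H2] := IH V hV y.
      exact: H1 y (refl y).
    exact: H2 y (refl y).
  by rewrite /= e; split => y _.
Qed.

End Sound.

Theorem theorem4p24 (Gamma : form -> Prop) (phi : form) :
  ICK Gamma phi <->
  (forall (X : topologicalType) (le : X -> X -> Prop)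
          (R : set X -> X -> X -> Prop),
     conditional_esakia_space le R ->
     (forall g, Gamma g -> valid le R g) ->
     valid le R phi).
Proof.
split.
  by move=> H X le R ces hG; exact: (soundness ces hG H).
move=> H.
have hG : forall g, Gamma g -> valid (@lept Gamma) (@Rc Gamma) g.
  move=> g Gg V hV x.
  have H1 : forall n, exists a, V n = [set x : pt Gamma | th x a].
    by move=> n; have [] := hV n; exact: cu_U.
  have [s hs] := boolp.choice H1.
  have -> : V = (fun n => [set x : pt Gamma | th x (s n)]) by apply: funext.
  rewrite truth_U; apply: thm_pt; apply: ick_subst; exact: ick_gamma.
have := H (pt Gamma) (@lept Gamma) (@Rc Gamma) (@canon_ces Gamma) hG
  _ (@valuation_U Gamma Var).
move=> Hx; apply: thm_complete => x.
by have := Hx x; rewrite truth_U subst_id.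
Qed.
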